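(* Let $P$ be a quasi-lattice ordered subsemigroup of a group $Q$ and $\Lambda$ an $(r,d)$-proper topological $P$-graph with path space $\Omega$. Let $A\in\Omega$. If $\lambda'\in A$ is extendable in $A$, then every $\lambda\in\Lambda$ with $\lambda\le\lambda'$ is extendable in $A$.
   Context: Quasi-lattice ordered: $P\subset Q$ subsemigroup with $P\cap P^{-1}=\{e\}$ such that two elements with a common upper bound (for $m\le n$ iff $n=mp$, $p\in P$) have a least upper bound. Topological $P$-graph: small category $\Lambda$, vertices $\Lambda^{(0)}\subset\Lambda$, $r,s:\Lambda\to\Lambda^{(0)}$, composition on pairs with $s(\lambda)=r(\mu)$; $\Lambda,\Lambda^{(0)}$ locally compact Hausdorff, $r,s$ continuous, $s$ a local homeomorphism, inclusion continuous, composition continuous and open; continuous multiplicative degree map $d:\Lambda\to P$, equal to $e$ on vertices, with composition $\Lambda^m*\Lambda^n\to\Lambda^{mn}$ a homeomorphism ($\Lambda^m=d^{-1}(m)$). $(r,d)$-proper: $(r,d):\Lambda\to\Lambda^{(0)}\times P$ proper. $\mu\le\lambda$ iff $\lambda=\mu\nu$ for some $\nu$. $\Omega$: nonempty closed hereditary (closed under $\le$-predecessors) directed (any two elements have a common upper bound inside) subsets of $\Lambda$. $E\subset\Lambda$ is exhaustive if for every $\lambda$ with $r(\lambda)\in r(E)$ there is $\mu\in E$ such that $\lambda,\mu$ have a common upper bound. For $A\in\Omega$, $\lambda\in A$ is extendable in $A$ if for every compact exhaustive $E\subset\Lambda$ with $r(E)$ a neighborhood of $s(\lambda)$ there exists $\mu\in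 E$ with $\lambda\mu\in A$. *)

(* Defs.v *)
From HB Require Import structures.
From mathcomp Require Import all_boot all_order.
From mathcomp Require Import all_classical all_reals topology.
Set Implicit Arguments. Unset Strict Implicit. Unset Printing Implicit Defensive.
Local Open Scope classical_set_scope.

Definition is_group (Q : Type) (mul : Q -> Q -> Q) (e : Q) (inv : Q -> Q) : Prop :=
  [/\ (forall x y z, mul x (mul y z) = mul (mul x y) z),
      (forall x, mul e x = x), (forall x, mul x e = x),
      (forall x, mul (inv x) x = e) & (forall x, mul x (inv x) = e)].

Definition is_cone (Q : Type) (mul : Q -> Q -> Q) (e : Q) (inv : Q -> Q)
  (P : set Q) : Prop :=
  (forall x y, P x -> P y -> P (mul x y)) /\
  (forall x, (P x /\ P (inv x)) <-> x = e).

Definition qle (Q : Type) (mul : Q -> Q -> Q) (P : set Q) (m n : Q) : Prop :=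
  exists2 p, P p & n = mul m p.

Definition quasi_lattice_ordered (Q : Type) (mul : Q -> Q -> Q) (e : Q)
  (inv : Q -> Q) (P : set Q) : Prop :=
  is_group mul e inv /\ is_cone mul e inv P /\
  forall m n, P m -> P n ->
    (exists k, qle mul P m k /\ qle mul P n k) ->
    exists l, [/\ qle mul P m l, qle mul P n l &
      forall k, qle mul P m k -> qle mul P n k -> qle mul P l k].

Definition loc_compact_hausdorff (T : topologicalType) : Prop :=
  hausdorff_space T /\ forall x : T, exists K : set T, compact K /\ nbhs x K.

Definition local_homeomorphism (T U : topologicalType) (f : T -> U) : Prop :=
  continuous f /\
  forall x : T, exists O : set T,
    [/\ open O, O x, {in O &, injective f}
      & forall W : set T, open W -> open (f @` (O `&` W))].

(* Lam = Λ (morphisms), V = Λ^(0) (with its own topology), iota : V -> Λ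
   the inclusion of vertices, r s : Λ -> V range and source, comp the
   composition (only meaningful on pairs with s λ = r μ), d : Λ -> Q the
   degree map (with values in P; P carries the discrete topology). *)

Definition composable (Lam V : Type) (r s : Lam -> V) : set (Lam * Lam) :=
  [set p | s p.1 = r p.2].

Definition topological_Pgraph (Q : Type) (mul : Q -> Q -> Q) (e : Q)
  (P : set Q) (Lam V : topologicalType) (iota : V -> Lam) (r s : Lam -> V)
  (comp : Lam -> Lam -> Lam) (d : Lam -> Q) : Prop :=
  [/\ injective iota,
      (forall v, r (iota v) = v /\ s (iota v) = v),
      (forall l, comp (iota (r l)) l = l /\ comp l (iota (s l)) = l),
      (forall l m, s l = r m -> r (comp l m) = r l /\ s (comp l m) = s m)
    & (forall l m n, s l = r m -> s m = r n ->
         comp l (comp m n) = comp (comp l m) n)] /\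
  [/\ loc_compact_hausdorff Lam, loc_compact_hausdorff V,
      continuous r, local_homeomorphism s & continuous iota] /\
  ({within composable r s, continuous (fun p : Lam * Lam => comp p.1 p.2)} /\
   forall W : set (Lam * Lam), open W ->
     open ((fun p : Lam * Lam => comp p.1 p.2) @` (W `&` composable r s))) /\
  (* degree map: P-valued, continuous for the discrete topology on P,
     multiplicative, e on vertices *)
  [/\ (forall l, P (d l)),
      (forall p, open (d @^-1` [set p])),
      (forall l m, s l = r m -> d (comp l m) = mul (d l) (d m))
    & (forall v, d (iota v) = e)] /\
  (* unique factorisation: composition Λ^m * Λ^n -> Λ^{mn} is a homeomorphism *)
  (forall m n, P m -> P n ->
     exists f : Lam -> Lam * Lam,
     [/\ (forall l, d l = mul m n ->
            [/\ s (f l).1 = r (f l).2, d (f l).1 = m, d (f l).2 = n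
              & comp (f l).1 (f l).2 = l]),
         (forall a b, s a = r b -> d a = m -> d b = n -> f (comp a b) = (a, b))
       & {within d @^-1` [set mul m n], continuous f}]).

(* (r,d)-proper: (r,d) : Λ -> Λ^(0) x P proper, P discrete; i.e. the preimage
   of K x {p} is compact for every compact K ⊆ Λ^(0) and p ∈ P *)
Definition rd_proper (Q : Type) (P : set Q) (Lam V : topologicalType)
  (r : Lam -> V) (d : Lam -> Q) : Prop :=
  forall (K : set V) (p : Q), compact K -> P p ->
    compact [set l | K (r l) /\ d l = p].

Definition pgle (Lam V : Type) (r s : Lam -> V) (comp : Lam -> Lam -> Lam)
  (m l : Lam) : Prop :=
  exists2 n, s m = r n & l = comp m n.

Definition common_ub (Lam V : Type) (r s : Lam -> V) (comp : Lam -> Lam -> Lam)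
  (l m : Lam) : Prop :=
  exists g, pgle r s comp l g /\ pgle r s comp m g.

Definition in_path_space (Lam : topologicalType) (V : Type) (r s : Lam -> V)
  (comp : Lam -> Lam -> Lam) (A : set Lam) : Prop :=
  [/\ A !=set0, closed A,
      (forall l m, A l -> pgle r s comp m l -> A m)
    & (forall l m, A l -> A m ->
         exists2 g, A g & pgle r s comp l g /\ pgle r s comp m g)].

Definition exhaustive (Lam V : Type) (r s : Lam -> V) (comp : Lam -> Lam -> Lam)
  (E : set Lam) : Prop :=
  forall l, (r @` E) (r l) -> exists2 m, E m & common_ub r s comp l m.

Definition extendable (Lam V : topologicalType) (r s : Lam -> V)
  (comp : Lam -> Lam -> Lam) (A : set Lam) (l : Lam) : Prop :=
  A l /\
  forall E : set Lam, compact E -> exhaustive r s comp E ->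
    nbhs (s l) (r @` E) ->
    exists2 m, E m & s l = r m /\ A (comp l m).

(* Main.v *)
Require Import Defs.
From mathcomp Require Import all_boot all_order.
From mathcomp Require Import all_classical all_reals topology.
From HB Require Import structures.
From Stdlib Require Import ClassicalEpsilon.
Local Open Scope classical_set_scope.

Lemma bigU_mem (I T : Type) (F : I -> set T) (s : seq I) (x : T) :
  (\big[setU/set0]_(i <- s) F i) x -> exists i, F i x.
Proof.
elim: s => [|a s IH]; first by rewrite big_nil.
rewrite big_cons => -[Fx|/IH//]; by exists a.
Qed.

Lemma bigU_in (I : eqType) (T : Type) (F : I -> set T) (s : seq I) (x : T) i :
  i \in s -> F i x -> (\big[setU/set0]_(j <- s) F j) x.
Proof.
elim: s => [//|a s IH]; rewrite in_cons big_cons => /orP[/eqP->|/IH H] Fx.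
  by left. by right; apply: H.
Qed.

Lemma within_fst (T U W : topologicalType) (A : set T) (f : T -> U * W) :
  {within A, continuous f} -> {within A, continuous (fun x => (f x).1)}.
Proof.
move=> fc x; apply: (@continuous_comp _ _ _ (f : subspace A -> U * W) fst).
  exact: fc.
exact: cvg_fst.
Qed.

Lemma within_snd (T U W : topologicalType) (A : set T) (f : T -> U * W) :
  {within A, continuous f} -> {within A, continuous (fun x => (f x).2)}.
Proof.
move=> fc x; apply: (@continuous_comp _ _ _ (f : subspace A -> U * W) snd).
  exact: fc.
exact: cvg_snd.
Qed.

Lemma closedI_pre (T U : topologicalType) (A O : set T) (B : set U) (g : T -> U) :
  closed A -> open O -> A `<=` O -> {within O, continuous g} -> closed B ->
  closed (A `&` g @^-1` B).
Proof.
move=> cA oO AO gc cB.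
have gc' : {in O, continuous g} by rewrite -continuous_open_subspace.
move=> x clx.
have Ax : A x by apply: cA => C Cx; have [y [[Ay _] Cy]] := clx C Cx; exists y.
split => //; apply: cB => N Nx.
have gx : continuous_at x g by apply: gc'; rewrite inE; exact: AO.
have : nbhs x (g @^-1` N) by exact: gx.
move=> /clx [y [[_ By] Ny]]; by exists (g y).
Qed.

Theorem lemma6p15 (Q : Type) (mul : Q -> Q -> Q) (e : Q) (inv : Q -> Q)
  (P : set Q) (Lam V : topologicalType) (iota : V -> Lam) (r s : Lam -> V)
  (comp : Lam -> Lam -> Lam) (d : Lam -> Q) :
  quasi_lattice_ordered mul e inv P ->
  topological_Pgraph mul e P iota r s comp d ->
  rd_proper P r d ->
  forall A : set Lam, in_path_space r s comp A ->
  forall l' : Lam, A l' -> extendable r s comp A l' ->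
  forall l : Lam, pgle r s comp l l' -> extendable r s comp A l.
Proof.
move=> [[gA g1 g2 gV1 gV2] [[Pmul _] qlo]].
rewrite /topological_Pgraph /loc_compact_hausdorff /local_homeomorphism.
move=> [[iota_inj iota_rs idl compRS assoc] [T2 [_ [T4 fact]]]].
case: T2 => [[hL lcL] hV rc [sc sloc] ic].
case: T4 => dP dopen dmul de.
move=> rdp A [A0 Acl Ahered Adir] l' Al' [_ l'ext] l [n sln El'].
subst l'.
split; first by apply: Ahered Al' _; exists n.
move=> E cE exE nbE.
have cancel : forall m a b, mul m a = mul m b -> a = b.
  move=> m a b h; rewrite -(g1 a) -(g1 b) -(gV1 m) -!gA h //.
have UF : forall a b a' b', s a = r b -> s a' = r b' ->
    comp a b = comp a' b' -> d a = d a' -> a = a' /\ b = b'.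
  move=> a b a' b' sab sab' eqc eqd.
  have db : d b' = d b.
    apply: (cancel (d a)); rewrite {1}eqd -(dmul _ _ sab') -(dmul _ _ sab) eqc //.
  have [f [_ f2 _]] := fact (d a) (d b) (dP a) (dP b).
  have := f2 a b sab erefl erefl; rewrite eqc (f2 a' b' sab' (esym eqd) db).
  by case=> -> ->.
pose FS m k (f : Lam -> Lam * Lam) :=
  [/\ (forall x, d x = mul m k ->
            [/\ s (f x).1 = r (f x).2, d (f x).1 = m, d (f x).2 = k
              & comp (f x).1 (f x).2 = x]),
         (forall a b, s a = r b -> d a = m -> d b = k -> f (comp a b) = (a, b))
       & {within d @^-1` [set mul m k], continuous f}].
pose F m k := epsilon (inhabits (fun _ : Lam => (l, l))) (FS m k).
have FP : forall m k, P m -> P k -> FS m k (F m k).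
  by move=> m k Pm Pk; apply: epsilon_spec; exact: fact.

pose dl := d n.
have [O [oO On Oinj Oopen]] := sloc n.
move: (nbE); rewrite nbhsE => -[U [oU Usl] UE].
pose G := O `&` r @^-1` U `&` d @^-1` [set dl].
have oG : open G.
  apply: openI; first apply: openI => //.
    by move: rc => /continuousP; apply.
  exact: dopen.
have nG : nbhs n G.
  apply: open_nbhs_nbhs; split => //; split; [split => // | by []].
  by rewrite /= -sln.
have [K0 [cK0 nK0]] := lcL n.
have reg := compact_regular hL cK0 nK0.
have [N nN clNG] := reg G nG.
pose W := K0 `&` closure N.
have cW : compact W by apply: compact_closedI => //; exact: closed_closure.
have clW : closed W by exact: compact_closed.
have WG : W `<=` G by move=> w [_ /clNG].
have [Z [oZ Zn] ZNK] : exists2 Z, open_nbhs n Z & Z `<=` N `&` K0.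
  have : nbhs n (N `&` K0) by apply: filterI.
  by rewrite nbhsE.
have ZW : Z `<=` W.
  move=> z /ZNK [Nz Kz]; split => //; exact: subset_closure.
pose KV := r @` W.
have cKV : compact KV.
  by apply: continuous_compact => //; exact: continuous_subspaceT.

pose Spec p (t : Q * Q * Q) := [/\ t.1.1 = mul dl t.1.2, P t.1.2,
  t.1.1 = mul p t.2, P t.2 &
  forall k, qle mul P dl k -> qle mul P p k -> qle mul P t.1.1 k].
pose tp p := epsilon (inhabits (e, e, e)) (Spec p).
pose pre1 p x := (F dl (tp p).1.2 x).1.
pose suf p x := (F dl (tp p).1.2 x).2.
pose pre2 p x := (F p (tp p).2 x).1.
pose C p := [set x | Spec p (tp p) /\ d x = (tp p).1.1 /\ KV (r x) /\
  W (pre1 p x) /\ E (pre2 p x)].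
pose S p := suf p @` C p.
have cS : forall p, P p -> compact (S p).
  move=> p Pp; have [Sp|NSp] := pselect (Spec p (tp p)); last first.
    have -> : S p = set0.
      apply/seteqP; split => [x [y [/NSp []]]|x []].
    exact: compact0.
  case: (Sp) => qE Px qE' Py _.
  have [Fa1 _ Fa3] := FP dl (tp p).1.2 (dP n) Px.
  have [Fb1 _ Fb3] := FP p (tp p).2 Pp Py.
  pose T := [set x | KV (r x) /\ d x = (tp p).1.1].
  have cT : compact T by apply: (rdp KV _ cKV); rewrite qE; apply: Pmul => //; exact: dP.
  have OT : T `<=` d @^-1` [set (tp p).1.1] by move=> x [].
  have oQ : open (d @^-1` [set (tp p).1.1]) by exact: dopen.
  have CE : C p = (T `&` pre1 p @^-1` W) `&` pre2 p @^-1` E.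
    apply/seteqP; split.
      by move=> x [_ [dx [Kx [Wx Ex]]]].
    by move=> x [[[Kx dx] Wx] Ex]; split.
  have cC : compact (C p).
    apply: (subclosed_compact _ cT); last by move=> x [_ [? [? _]]].
    rewrite CE; apply: (@closedI_pre _ _ _ (d @^-1` [set (tp p).1.1])) => //.
    - apply: (@closedI_pre _ _ _ (d @^-1` [set (tp p).1.1])) => //.
      + exact: compact_closed.
      + by apply: within_fst; rewrite qE.
    - by move=> x [[_ ?]].
    - by apply: within_fst; rewrite qE'.
    - exact: compact_closed.
  apply: continuous_compact => //.
  apply: (@continuous_subspaceW _ _ _ (d @^-1` [set (tp p).1.1])).
    by move=> x [_ []].
  by apply: within_snd; rewrite qE.

have ccE : cover_compact E.
  pose LP : ptopologicalType := HB.pack Lam (isPointed.Build Lam l).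
  have h := @compact_cover LP.
  have : @compact LP E by exact: cE.
  by rewrite h.
have [D' D'E ED'] := ccE Lam E (fun m => d @^-1` [set d m])
  (fun m _ => dopen (d m)) (fun m Em => ex_intro2 _ _ m Em erefl).
pose E' := \big[setU/set0]_(m <- finmap.enum_fset D') S (d m).
have cE' : compact E'.
  apply: bigsetU_compact => m _; exact: cS.
have E'P : forall m x, E m -> S (d m) x -> E' x.
  move=> m x Em Sx; have [m0 m0D dm] := ED' m Em.
  apply: (@bigU_in _ _ (fun m => S (d m)) _ _ m0) => //.
  by rewrite /= in dm; rewrite -dm.

have core : forall w la, W w -> r la = s w ->
    exists2 sg, E' sg & common_ub r s comp la sg.
  move=> w la Ww rla.
  have [[Ow Uw] dw] := WG w Ww.
  have [rom som] := compRS w la (esym rla).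
  have : (r @` E) (r (comp w la)) by rewrite rom; exact: UE.
  move=> /exE [mu Emu [g [[al sal gal] [be sbe gbe]]]].
  have slal : s la = r al by rewrite -som.
  have [rlal slal'] := compRS la al slal.
  have g' : g = comp w (comp la al) by rewrite gal assoc.
  have dg1 : d g = mul dl (d (comp la al)).
    by rewrite g' dmul ?dw // rlal.
  have dg2 : d g = mul (d mu) (d be) by rewrite gbe dmul.
  pose p := d mu.
  have Pp : P p := dP mu.
  have exSpec : exists t, Spec p t.
    have [q0 [[x Px qx] [y Py qy] least]] := qlo dl p (dP n) Pp
      (ex_intro _ (d g) (conj (ex_intro2 _ _ _ (dP _) dg1)
                              (ex_intro2 _ _ _ (dP _) dg2))).
    by exists (q0, x, y); split.
  have Sp : Spec p (tp p) := epsilon_spec _ _ exSpec.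
  case: (Sp) => qE Px qE' Py least.
  have [z Pz gz] := least (d g) (ex_intro2 _ _ _ (dP _) dg1)
                              (ex_intro2 _ _ _ (dP _) dg2).
  have Pq : P (tp p).1.1 by rewrite qE; apply: Pmul => //; exact: dP.
  have [Fq1 _ _] := FP _ _ Pq Pz.
  case Hx: (F (tp p).1.1 z g) => [xi rho].
  have [sxr dxi _ exi] : [/\ s xi = r rho, d xi = (tp p).1.1, d rho = z
      & comp xi rho = g] by move: (Fq1 g gz); rewrite Hx.
  have [Fa1 _ _] := FP dl (tp p).1.2 (dP n) Px.
  case Ha: (F dl (tp p).1.2 xi) => [a b].
  have [sab da _ eab] : [/\ s a = r b, d a = dl, d b = (tp p).1.2
      & comp a b = xi] by move: (Fa1 xi (etrans dxi qE)); rewrite Ha.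
  have [Fb1 _ _] := FP p (tp p).2 Pp Py.
  case Hb: (F p (tp p).2 xi) => [mu' t].
  have [smt dmu' _ emt] : [/\ s mu' = r t, d mu' = p, d t = (tp p).2
      & comp mu' t = xi] by move: (Fb1 xi (etrans dxi qE')); rewrite Hb.
  have [rab sab'] := compRS a b sab.
  have [rmt smt'] := compRS mu' t smt.
  have sbr : s b = r rho by rewrite -sab' eab.
  have str : s t = r rho by rewrite -smt' emt.
  have [rbr _] := compRS b rho sbr.
  have [rtr _] := compRS t rho str.
  have eg2 : g = comp a (comp b rho) by rewrite assoc // eab.
  have g3 : g = comp mu' (comp t rho) by rewrite assoc // emt.
  have [wa lb] : w = a /\ comp la al = comp b rho.
    apply: UF.
    - by rewrite rlal.
    - by rewrite rbr.
    - by rewrite -g' -eg2.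
    - by rewrite dw da.
  have [mm _] : mu = mu' /\ be = comp t rho.
    apply: UF => //.
    - by rewrite rtr.
    - by rewrite -gbe -g3.
  exists b.
    apply: (E'P mu b Emu); exists xi => //; last by rewrite /suf Ha.
    split => //; split => //; split.
      by exists a; [rewrite -wa | rewrite -eab rab].
    by rewrite /pre1 /pre2 Ha Hb /= -wa -mm.
  exists (comp la al); split; first by exists al.
  by exists rho.

have exE' : exhaustive r s comp E'.
  move=> la [sg0 E'sg0 rsg].
  have [m [xi [Sp [dxi [_ [Wx _]]]] esg]] := bigU_mem _ _ _ _ _ E'sg0.
  rewrite -esg in rsg.
  case: Sp => qE Px _ _ _.
  have [Fa1 _ _] := FP dl (tp (d m)).1.2 (dP n) Px.
  have [sab _ _ _] := Fa1 xi (etrans dxi qE).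
  apply: (core _ la Wx); rewrite -rsg; exact: esym.
have nbE' : nbhs (s (comp l n)) (r @` E').
  rewrite (compRS l n sln).2 nbhsE.
  exists (s @` (O `&` Z)).
    split; first exact: Oopen.
    by exists n.
  move=> v [w [Ow Zw] <-].
  have [sg E'sg [g [[al sal gal] [be sbe gbe]]]] :=
    core w (iota (s w)) (ZW w Zw) (iota_rs (s w)).1.
  exists sg => //.
  have [r1 _] := compRS _ _ sal.
  have [r2 _] := compRS _ _ sbe.
  by rewrite -r2 -gbe gal r1 (iota_rs (s w)).1.
have [sg E'sg [ssg Asg]] := l'ext E' cE' exE' nbE'.
have [m [xi [Sp [dxi [_ [Wx Ex]]]] esg]] := bigU_mem _ _ _ _ _ E'sg.
case: Sp => qE Px qE' Py _.
have [Fa1 _ _] := FP dl (tp (d m)).1.2 (dP n) Px.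
have [Fb1 _ _] := FP (d m) (tp (d m)).2 (dP m) Py.
move: Wx Ex esg; rewrite /pre1 /pre2 /suf.
case Ha: (F dl (tp (d m)).1.2 xi) => [a b].
case Hb: (F (d m) (tp (d m)).2 xi) => [mu' t] /= Wa Emu esg.
have [sab _ _ eab] : [/\ s a = r b, d a = dl, d b = (tp (d m)).1.2
    & comp a b = xi] by move: (Fa1 xi (etrans dxi qE)); rewrite Ha.
have [smt _ _ emt] : [/\ s mu' = r t, d mu' = d m, d t = (tp (d m)).2
    & comp mu' t = xi] by move: (Fb1 xi (etrans dxi qE')); rewrite Hb.
subst sg.
have [[Oa _] _] := WG a Wa.
have an : a = n.
  apply: Oinj; rewrite ?inE //.
  by rewrite sab -ssg (compRS l n sln).2.
subst a.
have [rab _] := compRS n b sab.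
have [rmt smt'] := compRS mu' t smt.
have slm : s l = r mu' by rewrite sln -rab eab -emt rmt.
exists mu' => //; split => //.
apply: (Ahered _ _ Asg); exists t.
  by rewrite (compRS l mu' slm).2.
rewrite -assoc // eab -emt assoc //.
Qed.
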